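(* Let $L$ be a construction of an ASC-hypergraph $H$ and let $Y\in L$. Then $L_Y$ is a construction of the ASC-hypergraph $H_Y$.
   Context: A hypergraph is a finite set $H$ of nonempty subsets of some finite set; its carrier is $\bigcup H$. For a family $F$ and set $Y$, $F_Y=\{X\in F\mid X\subseteq Y\}$. A hypergraph partition of $H$ is a partition $\{H_1,\dots,H_n\}$ ($n\ge0$) of the set $H$ with $\{\bigcup H_1,\dots,\bigcup H_n\}$ a partition of $\bigcup H$; $H$ is connected if it has exactly one hypergraph partition; the finest hypergraph partition is the unique one whose blocks are connected. $H$ is atomic if $\{x\}\in H$ for all $x\in\bigcup H$; saturated if $X_1,X_2\in H$ with $X_1\cap X_2\neq\emptyset$ imply $X_1\cup X_2\in H$. An ASC-hypergraph is one that is atomic, saturated and connected. Constructions of an atomic $H$, by induction on $|\bigcup H|$: (0) $\emptyset$ is the only construction of $\emptyset$; (1) if $|\bigcup H|\ge1$, $H$ connected, $x\in\bigcup H$, $K$ a construction of $H_{\bigcup H\setminus\{x\}}$, then $K\cup\{\bigcup H\}$ is a construction of $H$; (2) if $H$ is not connected with finest hypergraph partition $\{H_1,\dots,H_n\}$, $n\ge2$, and $K_i$ is a construction of $H_i$, then $K_1\cup\dots\cup K_n$ is a construction of $H$. *)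

(* Defs.v *)
From mathcomp Require Import all_boot.
Set Implicit Arguments. Unset Strict Implicit. Unset Printing Implicit Defensive.

Section Hyper.
Variable T : finType.
Implicit Types H F K P : {set {set T}}.

(* a hypergraph: a finite set of nonempty subsets of T; carrier = cover H *)
Definition hypergraph (H : {set {set T}}) : bool := set0 \notin H.

Definition restr (F : {set {set T}}) (Y : {set T}) : {set {set T}} :=
  [set X in F | X \subset Y].

Definition hpartition (H : {set {set T}}) (P : {set {set {set T}}}) : bool :=
  [&& partition P H,
      partition [set cover B | B in P] (cover H)
    & [forall B1 in P, forall B2 in P, (cover B1 == cover B2) ==> (B1 == B2)]].

Definition hconnected (H : {set {set T}}) : bool :=
  #|[set P : {set {set {set T}}} | hpartition H P]| == 1.

Definition finest_hpartition (H : {set {set T}}) (P : {set {set {set T}}}) : bool :=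
  hpartition H P && [forall B in P, hconnected B].

Definition atomic (H : {set {set T}}) : Prop :=
  forall x, x \in cover H -> [set x] \in H.

Definition saturated (H : {set {set T}}) : Prop :=
  forall X1 X2, X1 \in H -> X2 \in H -> X1 :&: X2 != set0 -> X1 :|: X2 \in H.

Definition ASC (H : {set {set T}}) : Prop :=
  [/\ atomic H, saturated H & hconnected H].

(* construction H K : K is a construction of the atomic hypergraph H *)
Inductive construction : {set {set T}} -> {set {set T}} -> Prop :=
| constr0 : construction set0 set0
| constr1 (H K : {set {set T}}) (x : T) :
    hypergraph H -> atomic H ->
    0 < #|cover H| -> hconnected H -> x \in cover H ->
    construction (restr H (cover H :\ x)) K ->
    construction H (cover H |: K)
| constr2 (H : {set {set T}}) (P : {set {set {set T}}})
          (Kf : {set {set T}} -> {set {set T}}) :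
    hypergraph H -> atomic H ->
    ~~ hconnected H -> finest_hpartition H P -> 2 <= #|P| ->
    (forall B, B \in P -> construction B (Kf B)) ->
    construction H (\bigcup_(B in P) Kf B).

End Hyper.

(* Main.v *)
Require Import Defs.
From mathcomp Require Import all_boot.
Set Implicit Arguments. Unset Strict Implicit. Unset Printing Implicit Defensive.

Section Aux.
Variable T : finType.
Implicit Types H F K : {set {set T}}.
Implicit Types A Y X Z : {set T}.

Lemma in_cover H X : X \in H -> X \subset cover H.
Proof. by move=> hX; apply: (bigcup_sup X hX). Qed.

Lemma cover_restr H A : cover (restr H A) \subset A.
Proof.
apply/subsetP => x /bigcupP [X]; rewrite inE => /andP [_ XA] xX.
exact: (subsetP XA).
Qed.

Lemma cover_restr2 H A : cover (restr H A) \subset cover H.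
Proof.
apply/subsetP => x /bigcupP [X]; rewrite inE => /andP [XH _] xX.
by apply/bigcupP; exists X.
Qed.

Lemma restr_restr H A Y : Y \subset A -> restr (restr H A) Y = restr H Y.
Proof.
move=> YA; apply/setP => X; rewrite !inE.
case XY: (X \subset Y); rewrite ?andbF ?andbT //.
by rewrite (subset_trans XY YA) andbT.
Qed.

Lemma restr_all K A : (forall Z, Z \in K -> Z \subset A) -> restr K A = K.
Proof.
move=> hK; apply/setP => X; rewrite !inE.
by case XK: (X \in K) => //=; apply: hK.
Qed.

Lemma saturated_restr H A : saturated H -> saturated (restr H A).
Proof.
move=> sH X1 X2; rewrite !inE => /andP [h1 s1] /andP [h2 s2] ne.
by rewrite sH // subUset s1 s2.
Qed.

Lemma constr_sub H K : construction H K ->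
  forall Z, Z \in K -> (Z != set0) && (Z \subset cover H).
Proof.
elim => {H K}.
- by move=> Z; rewrite inE.
- move=> H K x _ _ pos _ _ _ IH Z; rewrite in_setU1 => /orP [/eqP -> | ZK].
  + rewrite subxx andbT; apply/set0Pn.
    by move: pos; rewrite card_gt0 => /set0Pn.
  + case/andP: (IH Z ZK) => -> /= sub.
    exact: (subset_trans sub (cover_restr2 _ _)).
- move=> H P Kf _ _ _ fP _ _ IH Z /bigcupP [B BP ZB].
  case/andP: (IH B BP Z ZB) => -> /= sub.
  apply: (subset_trans sub); apply/subsetP => x /bigcupP [X XB xX].
  case/andP: fP => /and3P [/andP [/eqP cP _] _ _] _.
  apply/bigcupP; exists X => //; rewrite -cP; apply/bigcupP; by exists B.
Qed.

Lemma block_eq H P B1 B2 x : hpartition H P -> B1 \in P -> B2 \in P ->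
  x \in cover B1 -> x \in cover B2 -> B1 = B2.
Proof.
case/and3P => _ /andP [_ /andP [tI _]] /forallP inj b1 b2 x1 x2.
case: (eqVneq (cover B1) (cover B2)) => e.
  by move: (inj B1); rewrite b1 => /forallP /(_ B2); rewrite b2 e eqxx => /eqP.
move/trivIsetP: tI => /(_ (cover B1) (cover B2)).
rewrite !imset_f // => /(_ isT isT e) /disjoint_setI0 /setP /(_ x).
by rewrite !inE x1 x2.
Qed.

Lemma block_sub H P B : hpartition H P -> B \in P -> B \subset H.
Proof.
case/and3P => /and3P [/eqP cP _ _] _ _ BP; rewrite -cP.
exact: (bigcup_sup B BP).
Qed.

Lemma block_of H P X : hpartition H P -> X \in H -> exists2 B, B \in P & X \in B.
Proof.
case/and3P => /and3P [/eqP cP _ _] _ _; rewrite -cP => /bigcupP [B BP XB].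
by exists B.
Qed.

End Aux.

Lemma main (T : finType) (H L : {set {set T}}) : construction H L -> saturated H ->
  forall Y, Y \in L -> ASC (restr H Y) /\ construction (restr H Y) (restr L Y).
Proof.
move=> cHL; have cs := constr_sub cHL; move: cHL cs.
elim => {H L}.
- by move=> _ _ Y; rewrite inE.
- move=> H K x hH aH pos conH xH cK IH cs sH Y; rewrite in_setU1 => /orP [/eqP -> | YK].
  + rewrite restr_all; last exact: in_cover.
    rewrite restr_all; last by move=> Z /cs /andP [].
    by split; [split | apply: constr1 cK].
  + have csK := constr_sub cK.
    have [ASCY cY] := IH csK (@saturated_restr _ H _ sH) Y YK.
    have YA : Y \subset cover H :\ x.
      case/andP: (csK Y YK) => _ s; exact: (subset_trans s (cover_restr _ _)).
    rewrite restr_restr // in ASCY cY.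
    have -> : restr (cover H |: K) Y = restr K Y.
      apply/setP => Z; rewrite !inE; case: (eqVneq Z (cover H)) => //= ->; rewrite ?orbF ?eqxx /=.
      case sub: (cover H \subset Y); rewrite ?andbF //.
      by move/subsetP: (subset_trans sub YA) => /(_ x xH); rewrite !inE eqxx.
    by split.
- move=> H P Kf hH aH _ fP _ cK IH cs sH Y /bigcupP [B BP YB].
  have hP : hpartition H P by case/andP: fP.
  have BH := block_sub hP BP.
  have ne X : X \in H -> exists y, y \in X.
    by move=> XH; apply/set0Pn; apply: contraNneq hH => <-.
  have sB : saturated B.
    move=> X1 X2 h1 h2 n12.
    have h1H := subsetP BH _ h1; have h2H := subsetP BH _ h2.
    have [B' B'P UB'] := block_of hP (sH _ _ h1H h2H n12).
    have [y yX] := ne _ h1H.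
    suff -> : B = B' by [].
    apply: (block_eq (x := y) hP BP B'P).
      by apply/bigcupP; exists X1.
    by apply/bigcupP; exists (X1 :|: X2); rewrite // inE yX.
  have [ASCY cY] := IH B BP (constr_sub (cK B BP)) sB Y YB.
  have YcB : Y \subset cover B by case/andP: (constr_sub (cK B BP) YB).
  have eH : restr H Y = restr B Y.
    apply/setP => X; rewrite !inE; case XY: (X \subset Y); rewrite ?andbF ?andbT //.
    apply/idP/idP => [XH | /(subsetP BH) //].
    have [B' B'P XB'] := block_of hP XH; have [y yX] := ne _ XH.
    suff -> : B = B' by [].
    apply: (block_eq (x := y) hP BP B'P).
      exact: (subsetP YcB _ (subsetP XY _ yX)).
    by apply/bigcupP; exists X.
  have eL : restr (\bigcup_(B0 in P) Kf B0) Y = restr (Kf B) Y.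
    apply/setP => Z; rewrite !inE; case ZY: (Z \subset Y); rewrite ?andbF ?andbT //.
    apply/idP/idP => [/bigcupP [B' B'P ZB'] | ZB]; last by apply/bigcupP; exists B.
    case/andP: (constr_sub (cK B' B'P) ZB') => /set0Pn [y yZ] sub.
    suff -> : B = B' by [].
    apply: (block_eq (x := y) hP BP B'P).
      exact: (subsetP YcB _ (subsetP ZY _ yZ)).
    exact: (subsetP sub).
  by rewrite eH eL.
Qed.

Theorem proposition7p1 (T : finType) (H L : {set {set T}}) (Y : {set T}) :
  hypergraph H -> ASC H -> construction H L -> Y \in L ->
  ASC (restr H Y) /\ construction (restr H Y) (restr L Y).
Proof.
move=> _ [_ sH _] cHL YL; exact: main cHL sH Y YL.
Qed.
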